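(* Let $\Phi=(A;\{E_i\}_{i=0}^d;A^*;\{E^*_i\}_{i=0}^d)$ be a tridiagonal system on $V$ with $d\ge1$, such that $(A,A^* )$ satisfies the $q$-Serre relations, with $E_iV$ the eigenspace of $A$ for $\theta_i=q^{2i-d}$ and $E^*_iV$ the eigenspace of $A^*$ for $\theta^*_i=q^{d-2i}$. Let $P(x)=\sum_{i=0}^d\frac{(-1)^i\zeta_ix^i}{([i]^!_q)^2}$ be the Drinfel'd polynomial of the split sequence $\{\zeta_i\}_{i=0}^d$ of $\Phi$. Then $P\!\left(\frac{1}{(q-q^{-1})^2}\right)\ne0$.
   Context: $\mathcal K$ is an algebraically closed field; $V$ is a nonzero finite-dimensional vector space over $\mathcal K$; $q\in\mathcal K$ is nonzero and not a root of unity; $[i]_q=\frac{q^i-q^{-i}}{q-q^{-1}}$, $[i]^!_q=\prod_{n=1}^i[n]_q$. The $q$-Serre relations for $(X,Y)$: $X^3Y-[3]_qX^2YX+[3]_qXYX^2-YX^3=0$ and $Y^3X-[3]_qY^2XY+[3]_qYXY^2-XY^3=0$. Primitive idempotent of a diagonalizable $X$ for eigenvalue $\lambda_i$: $\prod_{j\ne i}\frac{X-\lambda_jI}{\lambda_i-\lambda_j}$. A tridiagonal system on $V$ is a sequence $(A;\{E_i\}_{i=0}^d;A^*;\{E^*_i\}_{i=0}^d)$ with $A,A^*$ diagonalizable, $\{E_i\}$, $\{E^*_i\}$ orderings of their primitive idempotents, $E_iA^*E_j=0$ and $E^*_iAE^*_j=0$ when $|i-j|>1$, and no subspaces other than $0,V$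 invariant under both $A$ and $A^*$. It is known that $\dim E^*_0V=1$. Split sequence: with $\tau_i(x)=\prod_{j=0}^{i-1}(x-\theta_j)$, $E^*_0\tau_i(A)$ acts on $E^*_0V$ as a scalar $\chi_i$, and $\zeta_i=\prod_{j=1}^i(\theta^*_0-\theta^*_j)\chi_i$. *)

(* Defs.v *)
From HB Require Import structures.
From mathcomp Require Import all_boot all_order all_algebra.
Set Implicit Arguments. Unset Strict Implicit. Unset Printing Implicit Defensive.
Import Order.TTheory GRing.Theory Num.Theory.
Local Open Scope ring_scope.

(* Linear maps on V = K^(n.+1) are represented by square matrices acting on
   COLUMN vectors (so the matrix product X *m Y is the composite "Y then X",
   as in the paper). *)

Section Defs.
Variable K : fieldType.

Definition not_root_of_unity (q : K) := forall k : nat, (0 < k)%N -> q ^+ k != 1.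

Definition qint (q : K) (i : nat) : K := (q ^+ i - q ^- i) / (q - q^-1).
Definition qfact (q : K) (i : nat) : K := \prod_(1 <= m < i.+1) qint q m.

Definition qSerre (q : K) (n : nat) (X Y : 'M[K]_n) :=
  X *m X *m X *m Y - qint q 3 *: (X *m X *m Y *m X)
    + qint q 3 *: (X *m Y *m X *m X) - Y *m X *m X *m X = 0 /\
  Y *m Y *m Y *m X - qint q 3 *: (Y *m Y *m X *m Y)
    + qint q 3 *: (Y *m X *m Y *m Y) - X *m Y *m Y *m Y = 0.

Definition prim_idem (n : nat) (X : 'M[K]_n.+1) (th : nat -> K) (d i : nat)
  : 'M[K]_n.+1 :=
  \prod_(j < d.+1 | (j : nat) != i) ((th i - th j)^-1 *: (X - (th j)%:M)).

Definition tau_mx (n : nat) (X : 'M[K]_n.+1) (th : nat -> K) (i : nat)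
  : 'M[K]_n.+1 :=
  \prod_(j < i) (X - (th j)%:M).

Definition tridiagonal_system (n d : nat) (A As : 'M[K]_n.+1)
    (th ths : nat -> K) :=
  let E := prim_idem A th d in
  let Es := prim_idem As ths d in
  [/\ diagonalizable A /\ diagonalizable As,
      (forall a, eigenvalue A a <-> exists2 i, (i <= d)%N & a = th i) /\
      (forall a, eigenvalue As a <-> exists2 i, (i <= d)%N & a = ths i),
      (forall i j, (i <= d)%N -> (j <= d)%N -> th i = th j -> i = j) /\
      (forall i j, (i <= d)%N -> (j <= d)%N -> ths i = ths j -> i = j),
      (forall i j, (i <= d)%N -> (j <= d)%N -> (i.+1 < j)%N || (j.+1 < i)%N ->
          E i *m As *m E j = 0 /\ Es i *m A *m Es j = 0) &
      (* irreducibility: the only subspaces W of column vectors with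
         A W <= W and As W <= W are 0 and V.  W is the column space of U,
         i.e. the row space of U^T. *)
      (forall U : 'M[K]_n.+1,
          stablemx U^T A^T -> stablemx U^T As^T ->
          (U == 0) || row_full U)].

Definition split_zeta (th ths : nat -> K) (chi : nat -> K) (i : nat) : K :=
  (\prod_(1 <= j < i.+1) (ths 0%N - ths j)) * chi i.

Definition drinfeld_poly (q : K) (d : nat) (zeta : nat -> K) : {poly K} :=
  \poly_(i < d.+1) ((-1) ^+ i * zeta i / (qfact q i) ^+ 2).

End Defs.

(* Main.v *)
Require Import Defs.
From HB Require Import structures.
From mathcomp Require Import all_boot all_order all_algebra.
From mathcomp Require Import ring.
Import Order.TTheory GRing.Theory Num.Theory.
Local Open Scope ring_scope.

Lemma thE (K : fieldType) (q : K) (d i : nat) : q != 0 ->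
  q ^ ((2 * i)%:Z - d%:Z) = q ^+ (2 * i) / q ^+ d.
Proof. by move=> q0; rewrite expfzDr // -exprnN. Qed.

Lemma thsE (K : fieldType) (q : K) (d i : nat) : q != 0 ->
  q ^ (d%:Z - (2 * i)%:Z) = q ^+ d / q ^+ (2 * i).
Proof. by move=> q0; rewrite expfzDr // -exprnN. Qed.

Lemma qpow_neq1 (K : fieldType) (q : K) k : not_root_of_unity q -> (0 < k)%N -> q ^+ k - 1 != 0.
Proof. by move=> h k0; rewrite subr_eq0 h. Qed.

Lemma termE (K : fieldType) (q : K) (d m : nat) : q != 0 -> not_root_of_unity q -> (0 < m)%N ->
  (q ^ ((2 * 0)%:Z - d%:Z) - q ^ ((2 * m)%:Z - d%:Z))^-1 =
  -1 * (q ^ (d%:Z - (2 * 0)%:Z) - q ^ (d%:Z - (2 * m)%:Z)) / (qint q m) ^+ 2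
    * ((q - q^-1) ^+ 2)^-1.
Proof.
move=> q0 hq m0; rewrite !thE // !thsE // /qint.
have x0 : q ^+ m != 0 by rewrite expf_neq0.
have d0 : q ^+ d != 0 by rewrite expf_neq0.
have h2 : q ^+ (2 * m) = (q ^+ m) ^+ 2 by rewrite mulnC exprM.
have a1 : (q ^+ m) ^+ 2 - 1 != 0 by rewrite -h2 qpow_neq1 // muln_gt0.
have q1 : q ^+ 2 - 1 != 0 by rewrite qpow_neq1.
have e1 : q - q^-1 = (q ^+ 2 - 1) / q by field.
have e2 : q ^+ m - (q ^+ m)^-1 = ((q ^+ m) ^+ 2 - 1) / q ^+ m by field.
rewrite h2 e1 e2 muln0 expr0.
have ha : 1 - (q ^+ m) ^+ 2 != 0 by rewrite -opprB oppr_eq0.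
by field; rewrite q0 q1 x0 a1 oner_eq0 d0 ha.
Qed.

Lemma prod4 (K : fieldType) (i : nat) (a : K) (b c : 'I_i -> K) (v : K) :
  \prod_(j < i) (a * b j / c j ^+ 2 * v) =
  a ^+ i * \prod_(j < i) b j / (\prod_(j < i) c j) ^+ 2 * v ^+ i.
Proof.
by rewrite !big_split /= prodfV prodrXl !prodr_const card_ord.
Qed.

Lemma drE (K : fieldType) (q : K) (d : nat) (chi : nat -> K) : q != 0 -> not_root_of_unity q ->
  let th := fun i : nat => q ^ ((2 * i)%:Z - d%:Z) in
  let ths := fun i : nat => q ^ (d%:Z - (2 * i)%:Z) in
  (drinfeld_poly q d (split_zeta th ths chi)).[((q - q^-1) ^+ 2)^-1] =
  \sum_(i < d.+1) (\prod_(j < i) (th 0%N - th j.+1)^-1) * chi i.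
Proof.
move=> q0 hq th ths; rewrite horner_poly; apply: eq_bigr => i _.
rewrite /split_zeta /qfact !big_add1 /= !big_mkord.
rewrite /th (eq_bigr _ (fun (j : 'I_i) _ => @termE K q d j.+1 q0 hq (ltn0Sn j))).
rewrite prod4 /ths; ring.
Qed.

Section PolyPart.
Variable K : fieldType.
Implicit Types th : nat -> K.

Definition Lp th d i : {poly K} :=
  \prod_(j < d.+1 | (j : nat) != i) ((th i - th j)^-1 *: ('X - (th j)%:P)).
Definition taup th i : {poly K} := \prod_(j < i) ('X - (th j)%:P).
Definition Dinv th i : K := \prod_(j < i) (th 0%N - th j.+1)^-1.

Lemma prim_idemE n (A : 'M[K]_n.+1) th d i :
  prim_idem A th d i = horner_mx A (Lp th d i).
Proof.
rewrite /prim_idem /Lp rmorph_prod; apply: eq_bigr => j _.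
by rewrite -[RHS]/(horner_mx A _) horner_mxZ rmorphB /= horner_mx_X horner_mx_C.
Qed.

Lemma tau_mxE n (A : 'M[K]_n.+1) th i : tau_mx A th i = horner_mx A (taup th i).
Proof.
rewrite /tau_mx /taup rmorph_prod; apply: eq_bigr => j _.
by rewrite rmorphB /= horner_mx_X horner_mx_C.
Qed.

Lemma Lp0_sum th d : (forall j, (0 < j <= d)%N -> th 0%N != th j) ->
  Lp th d 0 = \sum_(i < d.+1) Dinv th i *: taup th i.
Proof.
move=> hth.
have step : forall k, (k <= d)%N ->
  \sum_(i < k.+1) Dinv th i *: taup th i =
  Dinv th k *: \prod_(j < k) ('X - (th j.+1)%:P).
  elim=> [|k IH] hk.
    by rewrite big_ord1 /Dinv /taup !big_ord0 scale1r.
  rewrite big_ord_recr /= IH ?(ltnW hk) //.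
  rewrite /Dinv /taup big_ord_recr /= [in RHS]big_ord_recr /= big_ord_recl /=.
  set D := \prod_(j < k) _; set Q := \prod_(j < k) _.
  have c0 : th 0%N - th k.+1 != 0 by rewrite subr_eq0 hth.
  rewrite -!mul_polyC !polyCM.
  have eD : D%:P = (D * (th 0%N - th k.+1)^-1)%:P * ((th 0%N)%:P - (th k.+1)%:P).
    by rewrite -polyCB -polyCM mulfVK.
  by rewrite {1}eD polyCM; ring.
rewrite (step d) //  // /Lp big_mkcond big_ord_recl /= mul1r scaler_prod.
by rewrite /Dinv; congr (_ *: _).
Qed.
End PolyPart.

Section Idem.
Variable K : fieldType.
Variables (n d : nat) (A : 'M[K]_n.+1) (th : nat -> K).
Hypothesis thinj : forall i j, (i <= d)%N -> (j <= d)%N -> th i = th j -> i = j.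

Definition Lp' i : {poly K} :=
  \prod_(j < d.+1 | (j : nat) != i) ((th i - th j)^-1 *: ('X - (th j)%:P)).
Definition thseq := map th (iota 0 d.+1).
Definition Pth : {poly K} := \prod_(z <- thseq) ('X - z%:P).

Lemma thseq_uniq : uniq thseq.
Proof.
rewrite map_inj_in_uniq ?iota_uniq // => x y.
by rewrite !mem_iota !add0n !ltnS => /andP[_ hx] /andP[_ hy]; apply: thinj.
Qed.

Lemma Pth_dvd f : (forall k, (k <= d)%N -> f.[th k] = 0) -> Pth %| f.
Proof.
move=> hf; apply: uniq_roots_dvdp; last by rewrite uniq_rootsE thseq_uniq.
apply/allP => z /mapP [k]; rewrite mem_iota add0n ltnS => /andP[_ hk] ->.
by rewrite /root hf.
Qed.

Lemma Lp_eval i k : (i <= d)%N -> (k <= d)%N -> (Lp' i).[th k] = (i == k)%:R.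
Proof.
move=> hi hk; rewrite /Lp' horner_prod.
case: eqP => [<-|ne].
  apply: big1 => j hj; rewrite hornerZ hornerXsubC mulVf // subr_eq0.
  apply/eqP => /thinj h; move: hj; rewrite h ?eqxx //; by rewrite -ltnS ltn_ord.
rewrite (bigD1 (Ordinal (hk : (k < d.+1)%N))) /=; last by apply/eqP => h; apply: ne.
by rewrite hornerZ hornerXsubC subrr mulr0 mul0r.
Qed.

Hypothesis pA : horner_mx A Pth = 0.

Lemma vanish f : (forall k, (k <= d)%N -> f.[th k] = 0) -> horner_mx A f = 0.
Proof.
move=> /Pth_dvd hd; rewrite -(divpK hd) rmorphM /=.
by rewrite -[horner_mx A Pth]/(horner_mx A Pth) pA mulr0.
Qed.

Definition Em i := horner_mx A (Lp' i).

Lemma EmM i j : (i <= d)%N -> (j <= d)%N -> Em i * Em j = if i == j then Em i else 0.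
Proof.
move=> hi hj; rewrite /Em -rmorphM.
case: eqP => [<-|ne].
  apply/eqP; rewrite -subr_eq0 -rmorphB; apply/eqP/vanish => k hk.
  by rewrite hornerD hornerN hornerM Lp_eval //; case: (i == k); rewrite ?mulr1 ?mulr0 subrr.
apply: vanish => k hk; rewrite hornerM !Lp_eval //.
case: (eqVneq i k) => [ik|]; case: (eqVneq j k) => [jk|]; rewrite ?mulr0 ?mul0r //; by exfalso; apply: ne; rewrite ik jk.
Qed.

Lemma Em_sum : \sum_(i < d.+1) Em i = 1.
Proof.
rewrite /Em -rmorph_sum.
have -> : (1 : 'M_n.+1) = horner_mx A 1 by rewrite rmorph1.
apply/eqP; rewrite -subr_eq0 -rmorphB.
apply/eqP/vanish => k hk; rewrite hornerD hornerN hornerC horner_sum.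
rewrite (bigD1 (Ordinal (hk : (k < d.+1)%N))) //= Lp_eval // eqxx big1 ?addr0 ?subrr //.
move=> j /eqP hj; have hj' : (j <= d)%N by rewrite -ltnS ltn_ord.
rewrite Lp_eval //; case: eqP => // h.
by exfalso; apply: hj; apply: val_inj.
Qed.

Lemma AEm i : (i <= d)%N -> A * Em i = th i *: Em i.
Proof.
move=> hi; apply/eqP; rewrite -subr_eq0 /Em -{1}(horner_mx_X A) -rmorphM.
rewrite -[horner_mx A (Lp' i)]/(horner_mx A (Lp' i)) -horner_mxZ -rmorphB.
apply/eqP/vanish => k hk; rewrite hornerD hornerN hornerM hornerZ hornerX Lp_eval //.
by case: (eqVneq i k) => [->|_]; rewrite ?mulr0 ?subrr.
Qed.

Lemma EmA i : (i <= d)%N -> Em i * A = th i *: Em i.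
Proof.
move=> hi; rewrite -AEm // /Em; transitivity (horner_mx A (Lp' i * 'X)); first by rewrite rmorphM /= horner_mx_X.
by rewrite mulrC rmorphM /= horner_mx_X. Qed.


Lemma eig_horner (v : 'rV_n.+1) a f : v *m A = a *: v -> v *m horner_mx A f = f.[a] *: v.
Proof.
move=> hv; elim/poly_ind: f => [|p c IH]; first by rewrite rmorph0 mulmx0 horner0 scale0r.
rewrite rmorphD rmorphM /= horner_mx_X horner_mx_C hornerMXaddC mulmxDr -mulmxE mulmxA IH.
by rewrite -scalemxAl hv scalerA mul_mx_scalar scalerDl.
Qed.

Lemma Em_neq0 i : (i <= d)%N -> eigenvalue A (th i) -> Em i != 0.
Proof.
move=> hi /eigenvalueP [v hv v0]; apply/eqP => h.
have := @eig_horner v (th i) (Lp' i) hv; rewrite -/(Em i) h mulmx0 Lp_eval // eqxx scale1r => h0.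
by move: v0; rewrite -h0 eqxx.
Qed.

End Idem.

Lemma pA_of_diag (K : fieldType) n d (A : 'M[K]_n.+1) (th : nat -> K) :
  diagonalizable A -> (forall a, eigenvalue A a -> exists2 i, (i <= d)%N & a = th i) ->
  horner_mx A (@Pth K d th) = 0.
Proof.
move=> /diagonalizableP [rs urs hdv] heig.
apply/mxminpoly_minP.
set pm := mxminpoly A.
rewrite (bigID (root pm)) /= in hdv.
have cop : coprimep pm (\prod_(x <- rs | ~~ root pm x) ('X - x%:P)).
  apply: (big_ind (coprimep pm)) => [|x y hx hy|x hx]; [exact: coprimep1 | by rewrite coprimepMr hx hy| by rewrite coprimep_XsubC].
rewrite Gauss_dvdpl // in hdv.
apply: dvdp_trans hdv _.
rewrite -big_filter; apply: uniq_roots_dvdp; last by rewrite uniq_rootsE filter_uniq.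
apply/allP => x; rewrite mem_filter => /andP [hr _].
rewrite /Pth root_prod_XsubC.
have hx : eigenvalue A x by rewrite eigenvalue_root_min.
have [i hi ex] := heig x hx; rewrite ex.
by apply/mapP; exists i => //; rewrite mem_iota add0n ltnS.
Qed.

Lemma rowwise (K : fieldType) p m (M : 'M[K]_(p, m)) (X : 'M_m) :
  (forall v : 'rV_m, (v <= M)%MS -> v *m X = 0) -> M *m X = 0.
Proof. by move=> h; apply/row_matrixP => r; rewrite row_mul row0; apply: h; apply: row_sub. Qed.

Section Row.
Variables (K : fieldType) (m d : nat) (b bs : 'M[K]_m) (e es : nat -> 'M[K]_m) (th ths : nat -> K).
Hypothesis eM : forall i j, (i <= d)%N -> (j <= d)%N -> e i *m e j = if i == j then e i else 0.
Hypothesis esM : forall i j, (i <= d)%N -> (j <= d)%N -> es i *m es j = if i == j then es i else 0.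
Hypothesis eS : \sum_(i < d.+1) e i = 1%:M.
Hypothesis esS : \sum_(i < d.+1) es i = 1%:M.
Hypothesis be : forall i, (i <= d)%N -> b *m e i = th i *: e i.
Hypothesis bses : forall i, (i <= d)%N -> bs *m es i = ths i *: es i.
Hypothesis tri_e : forall i j, (i <= d)%N -> (j <= d)%N -> (i.+1 < j)%N ->
  e i *m bs *m e j = 0 /\ e j *m bs *m e i = 0.
Hypothesis tri_es : forall i j, (i <= d)%N -> (j <= d)%N -> (i.+1 < j)%N ->
  es i *m b *m es j = 0 /\ es j *m b *m es i = 0.
Hypothesis e0 : e 0%N != 0.
Hypothesis irr : forall W : 'M_m, stablemx W b -> stablemx W bs -> (W == 0) || row_full W.

Lemma ord_le (j : 'I_d.+1) : (j <= d)%N.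
Proof. by rewrite -ltnS ltn_ord. Qed.

Lemma decomp (f : nat -> 'M[K]_m) (v : 'rV_m) : \sum_(i < d.+1) f i = 1%:M ->
  v = \sum_(j < d.+1) v *m f j.
Proof. by move=> h; rewrite -mulmx_sumr h mulmx1. Qed.

Lemma zero_of (f : nat -> 'M[K]_m) (v : 'rV_m) : \sum_(i < d.+1) f i = 1%:M ->
  (forall j, (j <= d)%N -> v *m f j = 0) -> v = 0.
Proof.
move=> h hv; rewrite (@decomp f v h); apply: big1 => j _; apply: hv; exact: ord_le.
Qed.

Lemma comp (f : nat -> 'M[K]_m) (P : pred nat) (v : 'rV_m) k :
  (forall i j, (i <= d)%N -> (j <= d)%N -> f i *m f j = if i == j then f i else 0) ->
  (k <= d)%N ->
  v *m (\sum_(j < d.+1 | P j) f j) *m f k = if P k then v *m f k else 0.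
Proof.
move=> hf hk; rewrite -mulmxA mulmx_suml.
have hk' : (k < d.+1)%N by [].
case: ifP => Pk.
  rewrite (bigD1 (Ordinal hk')) //= hf // eqxx big1 ?addr0 //.
  move=> j /andP [_ /eqP hj]; rewrite hf ?ord_le //; case: eqP => // h.
  by exfalso; apply: hj; apply: val_inj.
rewrite big1 ?mulmx0 // => j Pj; rewrite hf ?ord_le //; case: eqP => // h.
by move: Pj; rewrite h Pk.
Qed.

Definition inT i (v : 'rV[K]_m) :=
  (forall j, (j <= d)%N -> (j <= i)%N -> v *m e j = 0) /\
  (forall j, (j <= d)%N -> (i < j)%N -> v *m es j = 0).

Definition Tm i : 'M[K]_m :=
  (kermx (\sum_(j < d.+1 | (j <= i)%N) e j) :&: kermx (\sum_(j < d.+1 | (i < j)%N) es j))%MS.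

Lemma inTP i v : (v <= Tm i)%MS <-> inT i v.
Proof.
rewrite /Tm sub_capmx !sub_kermx; split.
  move=> /andP [/eqP h1 /eqP h2]; split => j hj hij.
    by have := @comp e (fun j => (j <= i)%N) v j eM hj; rewrite h1 mul0mx /= hij.
  by have := @comp es (fun j => (i < j)%N) v j esM hj; rewrite h2 mul0mx /= hij.
move=> [h1 h2]; rewrite !mulmx_sumr !big1 ?eqxx // => j hj.
  by apply: h2 => //; apply: ord_le.
by apply: h1 => //; apply: ord_le.
Qed.

Lemma clA i v : inT i v -> inT i.+1 (v *m (b - (th i.+1)%:M)).
Proof.
move=> [h1 h2]; split => j hj hij.
  rewrite -mulmxA mulmxBl be // mul_scalar_mx -scalerBl -scalemxAr.
  case: (ltnP i j) => hij'.
    have -> : j = i.+1 by apply/eqP; rewrite eqn_leq hij hij'.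
    by rewrite subrr scale0r.
  by rewrite h1 // scaler0.
rewrite mulmxBr mulmxBl mul_mx_scalar -scalemxAl h2 ?(ltnW hij) // scaler0 subr0.
rewrite (@decomp es v esS) mulmx_suml mulmx_suml big1 // => k _.
have hk := ord_le k.
case: (ltnP i k) => hik; first by rewrite h2 // !mul0mx.
have hkj : (k.+1 < j)%N by apply: leq_ltn_trans hij; rewrite ltnS.
by rewrite -!mulmxA [es k *m _]mulmxA (tri_es k j hk hj hkj).1 mulmx0.
Qed.

Lemma clB i v : inT i v ->
  (forall j, (j <= d)%N -> (i <= j)%N -> v *m (bs - (ths i)%:M) *m es j = 0) /\
  (forall j, (j <= d)%N -> (j.+1 <= i)%N -> v *m (bs - (ths i)%:M) *m e j = 0).
Proof.
move=> [h1 h2]; split => j hj hij.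
  rewrite -mulmxA mulmxBl bses // mul_scalar_mx -scalerBl -scalemxAr.
  case: (ltnP i j) => hij'; first by rewrite h2 // scaler0.
  have -> : j = i by apply/eqP; rewrite eqn_leq hij hij'.
  by rewrite subrr scale0r.
rewrite mulmxBr mulmxBl mul_mx_scalar -scalemxAl h1 ?(ltnW hij) // scaler0 subr0.
rewrite (@decomp e v eS) mulmx_suml mulmx_suml big1 // => k _.
have hk := ord_le k.
case: (leqP k i) => hik; first by rewrite h1 // !mul0mx.
have hkj : (j.+1 < k)%N by apply: leq_ltn_trans hik.
by rewrite -!mulmxA [e k *m _]mulmxA (tri_e j k hj hk hkj).2 mulmx0.
Qed.

Definition W : 'M[K]_m := (\sum_(i < d.+1) Tm i)%MS.

Lemma Tm_W i : (i <= d)%N -> (Tm i <= W)%MS.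
Proof. by move=> hi; apply: (sumsmx_sup (Ordinal (hi : (i < d.+1)%N))). Qed.

Lemma W_stable (X : 'M[K]_m) :
  (forall i (v : 'rV_m), (i <= d)%N -> (v <= Tm i)%MS -> (v *m X <= W)%MS) -> stablemx W X.
Proof.
move=> h; apply/row_subP => r; rewrite row_mul.
have /sub_sumsmxP [u ->] := row_sub r W.
rewrite mulmx_suml; apply: summx_sub => i _; apply: h (ord_le i) _.
exact: submxMl.
Qed.

Lemma inT_W i v : (i <= d)%N -> inT i v -> (v <= W)%MS.
Proof. by move=> hi hv; apply: (submx_trans (proj2 (inTP i v) hv) (Tm_W i hi)). Qed.

Lemma W_eq0 : W = 0.
Proof.
have sb : stablemx W b.
  apply: W_stable => i v hi /inTP hv.
  rewrite -[b](subrK (th i.+1)%:M) mulmxDr mul_mx_scalar.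
  apply: addmx_sub; last by apply: scalemx_sub; apply: inT_W hi hv.
  case: (ltnP i d) => hid; first by apply: (@inT_W i.+1) => //; apply: clA.
  have -> : v = 0.
    by apply: (@zero_of e v eS) => j hj; apply: hv.1 => //; apply: leq_trans hj hid.
  by rewrite mul0mx sub0mx.
have sbs : stablemx W bs.
  apply: W_stable => i v hi /inTP hv.
  rewrite -[bs](subrK (ths i)%:M) mulmxDr mul_mx_scalar.
  apply: addmx_sub; last by apply: scalemx_sub; apply: inT_W hi hv.
  have [hB1 hB2] := @clB i v hv.
  case: i hi hv hB1 hB2 => [|i] hi hv hB1 hB2.
    have -> : v *m (bs - (ths 0%N)%:M) = 0 by apply: (@zero_of es _ esS) => j hj; apply: hB1.
    by rewrite sub0mx.
  apply: (@inT_W i); first by apply: ltnW.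
  by split => j hj hij; [apply: hB2 | apply: hB1].
have /orP [/eqP -> //|] := irr W sb sbs.
rewrite -sub1mx => h1; exfalso; move/negP: e0; apply.
rewrite -[e 0%N]mul1mx; apply/eqP; apply: rowwise => v hv.
have /sub_sumsmxP [u ->] := submx_trans hv h1.
rewrite mulmx_suml big1 // => i _.
have /inTP [h _] := submxMl (u i) (Tm i).
by apply: h.
Qed.

Lemma C1 p (M : 'M[K]_(p, m)) : M *m es 0%N = M -> M *m e 0%N = 0 -> M = 0.
Proof.
move=> h1 h2; apply/eqP; rewrite -submx0 -W_eq0.
apply/row_subP => r; apply: (@inT_W 0) => //; split => j hj hij.
  by move: hij; rewrite leqn0 => /eqP ->; rewrite -row_mul h2 row0.
by rewrite -row_mul -{1}h1 -mulmxA esM // eq_sym (gtn_eqF hij) mulmx0 row0.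
Qed.

End Row.

Theorem corollary8p3 (K : closedFieldType) (q : K) (n d : nat)
    (A As : 'M[K]_n.+1) (chi : nat -> K) :
  q != 0 -> not_root_of_unity q -> (1 <= d)%N ->
  let th := fun i : nat => q ^ ((2 * i)%:Z - d%:Z) in
  let ths := fun i : nat => q ^ (d%:Z - (2 * i)%:Z) in
  tridiagonal_system d A As th ths ->
  qSerre q A As ->
  (* chi i is the scalar by which E*_0 tau_i(A) acts on E*_0 V *)
  (forall i, (i <= d)%N ->
     prim_idem As ths d 0 *m tau_mx A th i *m prim_idem As ths d 0
       = chi i *: prim_idem As ths d 0) ->
  (drinfeld_poly q d (split_zeta th ths chi)).[((q - q^-1) ^+ 2)^-1] != 0.
Proof.
move=> q0 hq d1 th ths [[dA dAs] [eA eAs] [iA iAs] tri irr] _ hchi.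
have pA := @pA_of_diag K n d A th dA (fun a h => proj1 (eA a) h).
have pAs := @pA_of_diag K n d As ths dAs (fun a h => proj1 (eAs a) h).
set E := prim_idem A th d; set Es := prim_idem As ths d.
have EE : forall i, E i = Em K n d A th i by move=> i; exact: prim_idemE.
have EsE : forall i, Es i = Em K n d As ths i by move=> i; exact: prim_idemE.
have EM : forall i j, (i <= d)%N -> (j <= d)%N -> E i *m E j = if i == j then E i else 0.
  by move=> i j hi hj; rewrite !EE mulmxE (@EmM K n d A th iA pA).
have EsM : forall i j, (i <= d)%N -> (j <= d)%N -> Es i *m Es j = if i == j then Es i else 0.
  by move=> i j hi hj; rewrite !EsE mulmxE (@EmM K n d As ths iAs pAs).
have ES : \sum_(i < d.+1) E i = 1%:M by rewrite (eq_bigr _ (fun (i : 'I_d.+1) _ => EE i)) (@Em_sum K n d A th iA pA).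
have EsS : \sum_(i < d.+1) Es i = 1%:M by rewrite (eq_bigr _ (fun (i : 'I_d.+1) _ => EsE i)) (@Em_sum K n d As ths iAs pAs).
have EA : forall i, (i <= d)%N -> E i *m A = th i *: E i by move=> i hi; rewrite EE mulmxE (@EmA K n d A th iA pA).
have EsAs : forall i, (i <= d)%N -> Es i *m As = ths i *: Es i by move=> i hi; rewrite EsE mulmxE (@EmA K n d As ths iAs pAs).
have E0 : E 0%N != 0.
  by rewrite EE; apply: (@Em_neq0 K n d A th iA) => //; apply/(eA _); exists 0%N.
have Es0 : Es 0%N != 0.
  by rewrite EsE; apply: (@Em_neq0 K n d As ths iAs) => //; apply/(eAs _); exists 0%N.
pose e i := (E i)^T; pose es i := (Es i)^T.
have eM : forall i j, (i <= d)%N -> (j <= d)%N -> e i *m e j = if i == j then e i else 0.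
  move=> i j hi hj; rewrite /e -trmx_mul EM //.
  by case: (eqVneq j i) => [->|ne]; rewrite ?eqxx ?trmx0 // eq_sym (negbTE ne).
have esM : forall i j, (i <= d)%N -> (j <= d)%N -> es i *m es j = if i == j then es i else 0.
  move=> i j hi hj; rewrite /es -trmx_mul EsM //.
  by case: (eqVneq j i) => [->|ne]; rewrite ?eqxx ?trmx0 // eq_sym (negbTE ne).
have eS : \sum_(i < d.+1) e i = 1%:M by rewrite /e -[RHS]trmx1 -ES linear_sum.
have esS : \sum_(i < d.+1) es i = 1%:M by rewrite /es -[RHS]trmx1 -EsS linear_sum.
have be : forall i, (i <= d)%N -> A^T *m e i = th i *: e i.
  by move=> i hi; rewrite /e -trmx_mul EA // linearZ.
have bses : forall i, (i <= d)%N -> As^T *m es i = ths i *: es i.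
  by move=> i hi; rewrite /es -trmx_mul EsAs // linearZ.
have tri_e : forall i j, (i <= d)%N -> (j <= d)%N -> (i.+1 < j)%N ->
    e i *m As^T *m e j = 0 /\ e j *m As^T *m e i = 0.
  move=> i j hi hj hij; rewrite /e -!trmx_mul !mulmxA.
  rewrite (tri j i hj hi _).1; last by rewrite hij orbT.
  by rewrite (tri i j hi hj _).1 ?hij // trmx0.
have tri_es : forall i j, (i <= d)%N -> (j <= d)%N -> (i.+1 < j)%N ->
    es i *m A^T *m es j = 0 /\ es j *m A^T *m es i = 0.
  move=> i j hi hj hij; rewrite /es -!trmx_mul !mulmxA.
  rewrite (tri j i hj hi _).2; last by rewrite hij orbT.
  by rewrite (tri i j hi hj _).2 ?hij // trmx0.
have irrT : forall W : 'M_n.+1, stablemx W A^T -> stablemx W As^T -> (W == 0) || row_full W.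
  move=> W h1 h2; have := irr W^T; rewrite trmxK => /(_ h1 h2).
  by rewrite trmx_eq0 /row_full mxrank_tr.
have e0 : e 0%N != 0 by rewrite /e trmx_eq0.
have es0 : es 0%N != 0 by rewrite /es trmx_eq0.
have C1a := @C1 K n.+1 d A^T As^T e es th ths eM esM eS esS be bses tri_e tri_es e0 irrT.
have irrT' : forall W : 'M_n.+1, stablemx W As^T -> stablemx W A^T -> (W == 0) || row_full W.
  by move=> W h1 h2; apply: irrT.
have tri_e' : forall i j, (i <= d)%N -> (j <= d)%N -> (i.+1 < j)%N ->
    es i *m A^T *m es j = 0 /\ es j *m A^T *m es i = 0 by [].
have C1b := @C1 K n.+1 d As^T A^T es e ths th esM eM esS eS bses be tri_es tri_e es0 irrT'.
have thne : forall j, (0 < j <= d)%N -> th 0%N != th j.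
  move=> j /andP [j0 jd]; apply/eqP => h.
  by have := iA 0%N j (leq0n _) jd h => h0; move: j0; rewrite -h0.
have E0sum : E 0%N = \sum_(i < d.+1) Dinv K th i *: tau_mx A th i.
  rewrite /E prim_idemE Lp0_sum // rmorph_sum; apply: eq_bigr => i _.
  by rewrite -[LHS]/(horner_mx A _) horner_mxZ tau_mxE.
have key : Es 0%N *m E 0%N *m Es 0%N =
    (\sum_(i < d.+1) Dinv K th i * chi i) *: Es 0%N.
  rewrite E0sum mulmx_sumr mulmx_suml scaler_suml; apply: eq_bigr => i _.
  by rewrite -scalemxAr -scalemxAl hchi ?(@ord_le d i) // scalerA.
rewrite drE //; apply/eqP => hs.
move: key; rewrite hs scale0r => key.
have keyT : es 0%N *m e 0%N *m es 0%N = 0.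
  by rewrite /es /e -!trmx_mul mulmxA key trmx0.
have M1 : es 0%N *m e 0%N = 0.
  apply: C1b.
    by rewrite -mulmxA eM // eqxx.
  exact: keyT.
move/eqP: es0; apply; apply: C1a.
  by rewrite esM // eqxx.
exact: M1.
Qed.
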